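(* Let $F$ be an $h$-flipclass of $\mathfrak S_n$, let $E=E(F)$ and $m=|E|$. Then: (1) the set $F'=\{r_E(\Gamma):\Gamma\in F\}$ is an $h$-flipclass of $\mathfrak S_m$, and $r_E$ is a flips-preserving bijection from $F$ to $F'$ satisfying $r_E(l_i(\Gamma))=l_i(r_E(\Gamma))$ for all $\Gamma\in F$ and $i\in[h]$, where $l_i(\Delta)$ is the $i$-th label of a path $\Delta$; (2) $r_E$ induces an isomorphism of edge-labelled directed graphs from $S_F$ to $S_{F'}$ and from $TS_F$ to $TS_{F'}$, with labels also matched by $r_E$; (3) for any reflection ordering $\preceq$ of the transpositions of $\mathfrak S_n$, the increasing paths (w.r.t. $\preceq$) of $F$, $S_F$, $TS_F$ correspond under $r_E$ to the increasing paths (w.r.t. $\preceq_{r_E}$) of $F'$, $S_{F'}$, $TS_{F'}$, respectively; (4) $r_E$ induces an isomorphism from $F$ to $F'$.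
   Context: $\mathfrak S_n$ is the symmetric group on $[n]$, $T$ its transpositions, $\ell$ the length w.r.t. simple transpositions. The Bruhat graph $B(\mathfrak S_n)$ has an edge $x\xrightarrow{t}y$ iff $yx^{-1}=t\in T$ and $\ell(x)<\ell(y)$; $P_h(u,v)$ is the set of paths $u=x_0\to\cdots\to x_h=v$ of length $h$. Between two fixed vertices there are $0$ or $2$ paths of length $2$, each the flip of the other; the $i$-th flip operator $f_i$ ($i\in[h-1]$) replaces $x_{i-1}\to x_i\to x_{i+1}$ by its flip; an $h$-flipclass of $\mathfrak S_n$ is an orbit of $\langle f_1,\dots,f_{h-1}\rangle$ on some $P_h(u,v)$. For a path $\Gamma$ with labels $t_1,\dots,t_h$, let $M(\Gamma)=\{a\in[n]:t_i(a)\neq a \text{ for some } i\}$; $E(F)$ is $M(\Gamma)$ for any $\Gamma\in F$ (independent of $\Gamma$). For $E\subseteq[n]$ with $|E|=m$, $r_E:E\to[m]$ is the unique order-preserving bijection; for $w\in\mathfrak S_n$, $r_E(w)\in\mathfrak S_m$ is the permutation whose one-line notation is obtained from that of $w$ by deleting entries not in $E$ and applying $r_E$ to the remaining entries; for a path $\Gamma$ all of whose labels are transpositions $(a,b)$ with $a,b\in E$, $r_E(\Gamma)$ is the path in $B(\mathfrak S_m)$ obtained by applying $r_E$ to its vertices and labels ($r_E((a,b))=(r_E(a),r_E(b))$). For a total order $\preceq$ on transpositions of $\mathfrak S_n$, $\preceq_{r_E}$ is the total order on transpositions of $\mathfrak S_m$ with $(a,b)\preceq_{r_E}(c,d)$ iff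 $(r_E^{-1}(a),r_E^{-1}(b))\preceq(r_E^{-1}(c),r_E^{-1}(d))$. For a flipclass $F$: $S_F$ is the edge-labelled subgraph of $B(\mathfrak S_n)$ of vertices and edges lying on paths of $F$; $TS_F$ has vertices $(a,i)$ such that some path $(x_0,\dots,x_h)\in F$ has $x_i=a$, and edges $(a,i)\xrightarrow{t}(b,i+1)$ whenever some path of $F$ contains $x_i=a\xrightarrow{t}b=x_{i+1}$. A reflection ordering is a total order $\preceq$ on $T$ with, for $a<b<c$, either $(a,b)\preceq(a,c)\preceq(b,c)$ or $(b,c)\preceq(a,c)\preceq(a,b)$; a path with labels $t_1,\dots,t_h$ is increasing if $t_1\preceq\cdots\preceq t_h$. Isomorphism of flipclasses: for an $h$-flipclass $F$ of $\mathfrak S_n$ and $F'$ of $\mathfrak S_m$, a pair $(f,g)$ with $f$ a bijection from the permutations occurring on paths of $F$ onto those of $F'$ inducing (vertexwise) a bijection $F\to F'$ commuting with flip operators, $g$ a bijection from the labels of paths of $F$ onto those of $F'$ such that a path with labels $(t_1,\dots,t_h)$ goes to one with labels $(g(t_1),\dots,g(t_h))$, and $g$ order-preserving for the lexicographic orders of transpositions ($(a,b)<(c,d)$, $a<b$, $c<d$, iff $a<c$, or $a=c$ and $b<d$). *)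

(* Defs.v *)
(* Permutations of [n] are 'S_n = {perm 'I_n} (values 0..n-1).
   MathComp convention: (x * t) i = t (x i), so the paper's y x^{-1} = t
   (i.e. y = t o x) reads y = x * t, i.e. t = x^-1 * y here. *)
From mathcomp Require Import all_boot all_order all_fingroup.
Set Implicit Arguments. Unset Strict Implicit. Unset Printing Implicit Defensive.

Section BruhatDefs.
Variable n : nat.

Definition is_transp (t : 'S_n) : bool :=
  [exists a : 'I_n, exists b : 'I_n, (a != b) && (t == tperm a b)].

Definition is_simple (t : 'S_n) : bool :=
  [exists a : 'I_n, exists b : 'I_n, (val b == (val a).+1) && (t == tperm a b)].

Definition has_word (w : 'S_n) (k : nat) : bool :=
  [exists s : k.-tuple 'S_n, all is_simple s && ((\prod_(t <- s) t)%g == w)].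

(* Coxeter length: least k such that w is a product of k simple
   transpositions (every w has such a word of length <= n*n). *)
Definition ell (w : 'S_n) : nat := find (has_word w) (iota 0 (n * n).+1).

(* Bruhat graph edge x -> y : y x^{-1} in T (paper convention) and l(x) < l(y) *)
Definition bedge (x y : 'S_n) : bool := is_transp (x^-1 * y)%g && (ell x < ell y).

Variable h : nat.
(* A candidate path of length h is a (h+1)-tuple of vertices x_0..x_h *)
Definition vx (G : h.+1.-tuple 'S_n) (i : nat) : 'S_n := nth 1%g G i.

Definition is_path (G : h.+1.-tuple 'S_n) : bool :=
  [forall i : 'I_h, bedge (vx G i) (vx G i.+1)].

(* i-th label l_i, i in [h]:  x_{i-1} -l_i-> x_i *)
Definition lab (G : h.+1.-tuple 'S_n) (i : nat) : 'S_n := ((vx G i.-1)^-1 * vx G i)%g.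

Definition flip (i : nat) (G : h.+1.-tuple 'S_n) : h.+1.-tuple 'S_n :=
  if (0 < i < h) then
    match [pick z | (z != vx G i) && bedge (vx G i.-1) z && bedge z (vx G i.+1)] with
    | Some z => [tuple if val j == i then z else tnth G j | j < h.+1]
    | None => G
    end
  else G.

Definition flipstep : rel (h.+1.-tuple 'S_n) :=
  fun G G' => [exists i : 'I_h, G' == flip i G].

Definition is_flipclass (F : {set h.+1.-tuple 'S_n}) : Prop :=
  exists G, is_path G /\ F = [set G' | connect flipstep G G'].

Definition moved (G : h.+1.-tuple 'S_n) : {set 'I_n} :=
  [set a | [exists i : 'I_h, lab G i.+1 a != a]].
Definition EF (F : {set h.+1.-tuple 'S_n}) : {set 'I_n} :=
  \bigcup_(G in F) moved G.

Definition VS (F : {set h.+1.-tuple 'S_n}) : {set 'S_n} :=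
  [set x | [exists G in F, x \in (G : seq 'S_n)]].
Definition ES (F : {set h.+1.-tuple 'S_n}) : rel 'S_n :=
  fun x y => [exists G in F, exists i : 'I_h, (vx G i == x) && (vx G i.+1 == y)].

Definition VTS (F : {set h.+1.-tuple 'S_n}) : {set 'S_n * 'I_h.+1} :=
  [set p | [exists G in F, tnth G p.2 == p.1]].
Definition ETS (F : {set h.+1.-tuple 'S_n}) : rel ('S_n * 'I_h.+1) :=
  fun p q => (val q.2 == (val p.2).+1) &&
             [exists G in F, (tnth G p.2 == p.1) && (tnth G q.2 == q.1)].

Definition LS (F : {set h.+1.-tuple 'S_n}) : {set 'S_n} :=
  [set t | [exists G in F, exists i : 'I_h, lab G i.+1 == t]].

Definition labs (x0 : 'S_n) (s : seq 'S_n) : seq 'S_n :=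
  pairmap (fun x y => (x^-1 * y)%g) x0 s.
Definition incr_path (le : rel 'S_n) (G : h.+1.-tuple 'S_n) : bool :=
  sorted le [seq lab G i | i <- iota 1 h].

End BruhatDefs.

Section Orders.
Variable n : nat.

Definition refl_order (le : rel 'S_n) : Prop :=
  [/\ (forall t, is_transp t -> le t t),
      (forall t u, is_transp t -> is_transp u -> le t u -> le u t -> t = u),
      (forall t u v, is_transp t -> is_transp u -> is_transp v ->
                     le t u -> le u v -> le t v),
      (forall t u, is_transp t -> is_transp u -> le t u || le u t) &
      (forall a b c : 'I_n, a < b -> b < c ->
         (le (tperm a b) (tperm a c) && le (tperm a c) (tperm b c)) ||
         (le (tperm b c) (tperm a c) && le (tperm a c) (tperm a b)))].

Definition lexlt (t u : 'S_n) : bool :=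
  [exists a : 'I_n, exists b : 'I_n, exists c : 'I_n, exists d : 'I_n,
    [&& a < b, c < d, t == tperm a b, u == tperm c d &
        (a < c) || ((a == c) && (b < d))]].
End Orders.

Section Restriction.
Variable n : nat.
Implicit Type E : {set 'I_n}.

(* r_E : E -> [m], order preserving (rank of a inside E) *)
Definition rk E (a : 'I_n) : nat := #|[set b in E | b < a]|.
Definition rkO E (a : 'I_n) : option 'I_#|E| := insub (rk E a).

Definition is_rE_transp E (a b : 'I_n) (s : 'S_#|E|) : bool :=
  match rkO E a, rkO E b with
  | Some a', Some b' => s == tperm a' b'
  | _, _ => false
  end.

(* one-line notation of w, entries not in E deleted, r_E applied *)
Definition oneline E (w : 'S_n) : seq nat :=
  [seq rk E (w i) | i <- enum 'I_n & w i \in E].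

Definition perm_or1 (T : finType) (f : T -> T) : {perm T} :=
  match injectiveP f with ReflectT H => perm H | ReflectF _ => 1%g end.

Definition rE E (w : 'S_n) : 'S_#|E| :=
  perm_or1 (fun j : 'I_#|E| => insubd j (nth 0 (oneline E w) j)).

Definition rE_order E (le : rel 'S_n) : rel 'S_#|E| :=
  fun s t => [exists a : 'I_n, exists b : 'I_n, exists c : 'I_n, exists d : 'I_n,
    (a \in E) && (b \in E) && (c \in E) && (d \in E) &&
    @is_rE_transp E a b s && @is_rE_transp E c d t && le (tperm a b) (tperm c d)].
End Restriction.
Arguments is_rE_transp : clear implicits.
Arguments is_rE_transp {n} E a b s.
Arguments rE : clear implicits.
Arguments rE {n} E w.
Arguments rE_order : clear implicits.
Arguments rE_order {n} E le.
Arguments rkO : clear implicits.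
Arguments rkO {n} E a.

Definition graph_iso (A B : finType) (V1 : {set A}) (E1 : rel A)
  (V2 : {set B}) (E2 : rel B) (f : A -> B) : Prop :=
  [/\ {in V1 &, injective f}, f @: V1 = V2 &
      {in V1 &, forall x y, E1 x y = E2 (f x) (f y)}].

Definition flip_iso (n m h : nat) (F : {set h.+1.-tuple 'S_n})
  (F' : {set h.+1.-tuple 'S_m}) (f g : 'S_n -> 'S_m) : Prop :=
  [/\ {in VS F &, injective f} /\ f @: VS F = VS F',
      [set map_tuple f G | G in F] = F' /\ {in F &, injective (map_tuple f)},
      (forall G i, G \in F -> map_tuple f (flip i G) = flip i (map_tuple f G)),
      ({in LS F &, injective g} /\ g @: LS F = LS F') /\
      (forall G i, G \in F -> 1 <= i <= h -> lab (map_tuple f G) i = g (lab G i)) &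
      {in LS F &, forall t u, lexlt t u -> lexlt (g t) (g u)}].

(* Main.v *)
Require Import Defs.
From mathcomp Require Import all_boot all_order all_fingroup.
From mathcomp Require Import zify.
Set Implicit Arguments. Unset Strict Implicit. Unset Printing Implicit Defensive.

Section Len.
Variable n : nat.
Implicit Types (f x w : 'S_n) (a b : 'I_n).

Definition Iset f : {set 'I_n * 'I_n} := [set p : 'I_n * 'I_n | (p.1 < p.2) && (f p.2 < f p.1)].
Definition Ninv f := #|Iset f|.

Definition Phi a b (p : 'I_n * 'I_n) :=
  if tperm a b p.1 < tperm a b p.2 then (tperm a b p.1, tperm a b p.2) else p.

Lemma ordE (x y : 'I_n) : (x == y) = (val x == val y). Proof. by []. Qed.

Lemma Phi_inj a b : {in [pred p : 'I_n * 'I_n | p.1 < p.2] &, injective (Phi a b)}.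
Proof.
move=> [x1 y1] [x2 y2]; rewrite !inE /= /Phi /= => h1 h2.
case: ifP => c1; case: ifP => c2 //.
- by case=> /perm_inj -> /perm_inj ->.
- by case=> e1 e2; move: c2; rewrite -e1 -e2 !tpermK h1.
- by case=> e1 e2; move: c1; rewrite e1 e2 !tpermK h2.
Qed.

Lemma rev_pair a b (x y : 'I_n) : a < b -> x < y -> tperm a b y < tperm a b x ->
  [\/ (x = a /\ y = b), (x = a /\ a < y < b) | (y = b /\ a < x < b)].
Proof.
move=> ab xy.
case: (tpermP a b y) => [?|?|ya yb]; case: (tpermP a b x) => [?|?|xa xb]; subst; try lia.
- by move=> _; apply: Or31.
- by move=> h; apply: Or33; split=> //; lia.
- by move=> h; apply: Or32; split=> //; lia.
Qed.

Lemma neq_ord (x y : 'I_n) : (x != y) = (x < y) || (y < x).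
Proof. by rewrite -neq_ltn. Qed.

Lemma tperm_rev a b (x y : 'I_n) : x < y -> ~~ (tperm a b x < tperm a b y) ->
  tperm a b y < tperm a b x.
Proof.
move=> xy; rewrite -leqNgt leq_eqVlt => /orP [/eqP e|//].
by move: xy; rewrite (perm_inj (val_inj e)) ltnn.
Qed.

Lemma IsetE f (p : 'I_n * 'I_n) : (p \in Iset f) = (p.1 < p.2) && (f p.2 < f p.1).
Proof. by rewrite inE. Qed.

Lemma Phi_sub a b f : a < b -> f a < f b ->
  Phi a b @: Iset f \subset Iset (tperm a b * f).
Proof.
move=> ab fab; apply/subsetP => q /imsetP [[x y]]; rewrite IsetE /= => /andP [xy fyx] ->.
rewrite /Phi /=; case: ifP => c.
  by rewrite IsetE /= c !permM !tpermK.
have r := tperm_rev xy (negbT c).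
rewrite IsetE /= xy !permM /=.
case: (rev_pair ab xy r) => [[??]|[? /andP [ay yb]]|[? /andP [ax xb]]]; subst.
- by move: fyx; rewrite ltnNge (ltnW fab).
- rewrite tpermL tpermD; first by apply: ltn_trans fab.
  + by rewrite neq_ord; apply/orP; lia.
  + by rewrite neq_ord; apply/orP; lia.
- rewrite tpermR tpermD; first by apply: ltn_trans fyx.
  + by rewrite neq_ord; apply/orP; lia.
  + by rewrite neq_ord; apply/orP; lia.
Qed.

Lemma Phi_notin a b f : a < b -> f a < f b -> (a, b) \notin Phi a b @: Iset f.
Proof.
move=> ab fab; apply/imsetP => [[[x y]]]; rewrite IsetE /= => /andP [xy fyx].
rewrite /Phi /=; case: ifP => c.
  case=> e1 e2; move: xy; rewrite -(tpermK a b x) -(tpermK a b y) -e1 -e2 tpermL tpermR.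
  by rewrite ltnNge (ltnW ab).
by case=> ??; subst; move: fyx; rewrite ltnNge (ltnW fab).
Qed.

Lemma Ninv_lt a b f : a < b -> f a < f b -> Ninv f < Ninv (tperm a b * f).
Proof.
move=> ab fab; rewrite /Ninv -(card_in_imset (f:=Phi a b) (D:=Iset f)); last first.
  move=> p q pI qI; apply: Phi_inj; rewrite inE.
  - by move: pI; rewrite IsetE => /andP [].
  - by move: qI; rewrite IsetE => /andP [].
apply: proper_card; rewrite properE Phi_sub //=; apply/subsetPn; exists (a, b).
  by rewrite IsetE /= ab !permM tpermL tpermR.
exact: Phi_notin.
Qed.

Lemma Ninv_succ a b f : (b : nat) = (a : nat).+1 -> f a < f b ->
  Ninv (tperm a b * f) = (Ninv f).+1.
Proof.
move=> eb fab; have ab : a < b by rewrite eb.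
rewrite /Ninv; have -> : Iset (tperm a b * f) = (a, b) |: (Phi a b @: Iset f).
  apply/eqP; rewrite eqEsubset; apply/andP; split; last first.
    rewrite subUset Phi_sub // andbT sub1set.
    by rewrite IsetE /= ab !permM tpermL tpermR.
  apply/subsetP => [[x y]]; rewrite IsetE /= !permM => /andP [xy fxy].
  rewrite !inE; case: (eqVneq (x, y) (a, b)) => //= ne.
  case: (boolP (tperm a b x < tperm a b y)) => c; last first.
    have r := tperm_rev xy c.
    case: (rev_pair ab xy r) => [[??]|[? /andP [ay yb]]|[? /andP [ax xb]]]; subst.
    - by rewrite eqxx in ne.
    - lia.
    - lia.
  apply/imsetP; exists (tperm a b x, tperm a b y).
    by rewrite IsetE /= c.
  by rewrite /Phi /= !tpermK xy.
rewrite cardsU1 Phi_notin // card_in_imset //.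
move=> p q pI qI; apply: Phi_inj; rewrite inE.
- by move: pI; rewrite IsetE => /andP [].
- by move: qI; rewrite IsetE => /andP [].
Qed.

Lemma Ninv_le a b f : (b : nat) = (a : nat).+1 -> Ninv (tperm a b * f) <= (Ninv f).+1.
Proof.
move=> eb; have ab : a != b by rewrite neq_ord eb ltnSn.
case: (ltngtP (f a) (f b)) => [fab|fba|/val_inj/perm_inj e]; last by rewrite e eqxx in ab.
  by rewrite Ninv_succ.
have := @Ninv_succ a b (tperm a b * f) eb; rewrite !permM tpermL tpermR => /(_ fba).
by rewrite mulgA tperm2 mul1g => ->; apply: leqW; apply: ltnW.
Qed.

Lemma mono_of_succ (g : 'I_n -> 'I_n) :
  (forall a b : 'I_n, (b : nat) = (a : nat).+1 -> g a < g b) ->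
  forall i j : 'I_n, i < j -> g i < g j.
Proof.
move=> H.
have K : forall k (i j : 'I_n), (j : nat) = i + k.+1 -> g i < g j.
  elim=> [|k IH] i j e; first by apply: H; rewrite e addn1.
  have lt : i + k.+1 < n by move: (ltn_ord j); lia.
  apply: (ltn_trans (IH i (Ordinal lt) erefl)); apply: H => /=; lia.
move=> i j ij; apply: (K (j - i.+1)); lia.
Qed.

Lemma mono_ge (g : 'I_n -> 'I_n) :
  (forall i j : 'I_n, i < j -> g i < g j) -> forall i : 'I_n, i <= g i.
Proof.
move=> H.
have K : forall k (i : 'I_n), (i : nat) = k -> k <= g i.
  elim=> [|k IH] i e //.
  have lt : k < n by move: (ltn_ord i); lia.
  have := IH (Ordinal lt) erefl; have := H (Ordinal lt) i; rewrite /= e ltnSn => /(_ isT).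
  lia.
by move=> i; apply: K.
Qed.

Lemma nodesc_id f :
  (forall a b : 'I_n, (b : nat) = (a : nat).+1 -> f a < f b) -> f = 1%g.
Proof.
move=> H; have M := mono_of_succ H.
have Mi : forall i j : 'I_n, i < j -> f^-1%g i < f^-1%g j.
  move=> i j ij; case: (ltngtP (f^-1%g i) (f^-1%g j)) => // c.
    by have := M _ _ c; rewrite !permKV ltnNge (ltnW ij).
  by move: ij; rewrite -(permKV f i) -(permKV f j) (val_inj c) ltnn.
apply/permP => i; rewrite perm1; apply/val_inj/eqP; rewrite eqn_leq.
apply/andP; split; last exact: mono_ge.
by have := mono_ge Mi (f i); rewrite permK.
Qed.

Lemma Ninv1 : Ninv 1%g = 0.
Proof.
apply/eqP; rewrite cards_eq0; apply/eqP/setP => p; rewrite IsetE !perm1 inE.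
by case: ltngtP.
Qed.

Lemma Ninv0 f : Ninv f = 0 -> f = 1%g.
Proof.
move/eqP; rewrite cards_eq0 => /eqP E0; apply: nodesc_id => a b eb.
case: (ltngtP (f a) (f b)) => // c.
  have : (a, b) \in Iset f by rewrite IsetE /= c eb ltnSn.
  by rewrite E0 inE.
by move: eb; rewrite (perm_inj (val_inj c)); lia.
Qed.

Lemma desc_ex f : f != 1%g ->
  exists a b : 'I_n, (b : nat) = (a : nat).+1 /\ f b < f a.
Proof.
move=> nf.
case: (boolP [exists a : 'I_n, exists b : 'I_n, ((b : nat) == (a : nat).+1) && (f b < f a)]).
  by case/existsP => a /existsP [b /andP [/eqP e c]]; exists a, b.
rewrite negb_exists => /forallP H; case/eqP: nf; apply: nodesc_id => a b eb.
have := H a; rewrite negb_exists => /forallP /(_ b); rewrite eb eqxx /= -leqNgt.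
rewrite leq_eqVlt => /orP [/eqP e|//].
by move: eb; rewrite (perm_inj (val_inj e)); lia.
Qed.

Lemma word_ex k w : Ninv (w^-1)%g = k -> has_word w k.
Proof.
elim: k w => [|k IH] w e.
  apply/existsP; exists [tuple]; rewrite /= big_nil.
  by have := Ninv0 e; move/(congr1 (fun x => x^-1)%g); rewrite invgK invg1 => ->.
have : (w^-1)%g != 1%g by apply/eqP => h; move: e; rewrite h Ninv1.
case/desc_ex => a [b [eb fba]].
set t := tperm a b.
have e' : Ninv ((w * t)^-1)%g = k.
  rewrite invMg tpermV.
  have := @Ninv_succ a b (t * w^-1)%g eb; rewrite !permM tpermL tpermR => /(_ fba).
  by rewrite mulgA tperm2 mul1g e => -[->].
case/existsP: (IH _ e') => s /andP [als ps].
apply/existsP; exists [tuple of rcons s t]; rewrite /= all_rcons als andbT.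
rewrite big_rcons /= (eqP ps) -mulgA tperm2 mulg1 eqxx andbT.
by apply/existsP; exists a; apply/existsP; exists b; rewrite eqxx -eb eqxx.
Qed.

Lemma word_le_seq (s : seq 'S_n) : all (@is_simple n) s ->
  Ninv ((\prod_(t <- s) t)^-1)%g <= size s.
Proof.
elim/last_ind: s => [|s t IH]; first by rewrite big_nil invg1 Ninv1.
rewrite all_rcons => /andP [st als]; rewrite big_rcons /= invMg size_rcons.
case/existsP: st => a /existsP [b /andP [/eqP eb /eqP ->]].
rewrite tpermV; apply: leq_trans (Ninv_le _ eb) _.
by rewrite ltnS IH.
Qed.

Lemma word_le k w : has_word w k -> Ninv (w^-1)%g <= k.
Proof.
case/existsP => s /andP [als /eqP <-].
by have := word_le_seq als; rewrite size_tuple.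
Qed.

Lemma find_iota0 (P : pred nat) k L :
  P k -> (forall j, j < k -> ~~ P j) -> k < L -> find P (iota 0 L) = k.
Proof.
move=> Pk H kL.
have hs : has P (iota 0 L) by apply/hasP; exists k; rewrite ?mem_iota.
case: (ltngtP (find P (iota 0 L)) k) => // c.
- have := nth_find 0 hs; rewrite nth_iota ?add0n.
    by move/negP: (H _ c).
  by apply: ltn_trans kL.
- by have := before_find 0 c; rewrite nth_iota ?add0n ?Pk.
Qed.

Lemma Ninv_bound f : Ninv f < (n * n).+1.
Proof.
rewrite ltnS /Ninv; apply: leq_trans (max_card _) _.
by rewrite card_prod card_ord.
Qed.

Lemma ellE w : ell w = Ninv (w^-1)%g.
Proof.
rewrite /ell; apply: find_iota0.
- exact: word_ex.
- by move=> j jlt; apply/negP => /word_le; rewrite leqNgt jlt.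
- exact: Ninv_bound.
Qed.

Lemma ell_tperm_lt x a b : a < b ->
  (ell x < ell (x * tperm a b)%g) = ((x^-1)%g a < (x^-1)%g b).
Proof.
move=> ab; rewrite !ellE invMg tpermV.
have ne : a != b by rewrite neq_ord ab.
case: (ltngtP ((x^-1)%g a) ((x^-1)%g b)) => [c|c|/val_inj/perm_inj e].
- exact: Ninv_lt.
- set f := (tperm a b * x^-1)%g.
  have := @Ninv_lt a b f ab; rewrite /f !permM tpermL tpermR => /(_ c).
  by rewrite mulgA tperm2 mul1g => /ltnW; rewrite leqNgt => /negbTE.
- by rewrite e eqxx in ne.
Qed.

Lemma ell_tperm x a b : a != b ->
  (ell x < ell (x * tperm a b)%g) = ((a < b) == ((x^-1)%g a < (x^-1)%g b)).
Proof.
rewrite neq_ord => /orP [ab|ba]; first by rewrite ell_tperm_lt // ab.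
have -> : (a < b) = false by rewrite ltnNge (ltnW ba).
rewrite tpermC ell_tperm_lt //.
case: (ltngtP ((x^-1)%g a) ((x^-1)%g b)) => //.
by move/val_inj/perm_inj => e; move: ba; rewrite e ltnn.
Qed.

End Len.
Lemma card_cnt (T : finType) (p : pred T) : #|[set x | p x]| = count p (enum T).
Proof.
rewrite cardE /enum_mem size_filter -enumT count_filter.
by apply: eq_count => x; rewrite !inE /= andbT.
Qed.

Section Rank.
Variable n : nat.
Implicit Types (A E : {set 'I_n}) (a b c : 'I_n) (x y : 'S_n).

Lemma rk_lt A a : a \in A -> rk A a < #|A|.
Proof.
move=> aA; apply: proper_card; rewrite properE; apply/andP; split.
  by apply/subsetP => b; rewrite inE => /andP [].
by apply/subsetPn; exists a; rewrite // inE ltnn andbF.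
Qed.

Lemma rk_mono A a b : a \in A -> a < b -> rk A a < rk A b.
Proof.
move=> aA ab; apply: proper_card; rewrite properE; apply/andP; split.
  apply/subsetP => c; rewrite !inE => /andP [-> ca] /=; exact: ltn_trans ab.
by apply/subsetPn; exists a; rewrite !inE ?aA ?ab // ltnn andbF.
Qed.

Lemma rk_ltE A a b : a \in A -> b \in A -> (rk A a < rk A b) = (a < b).
Proof.
move=> aA bA; case: (ltngtP a b) => c.
- exact: rk_mono.
- by apply/negbTE; rewrite -leqNgt ltnW // rk_mono.
- by rewrite (val_inj c) ltnn.
Qed.

Lemma rk_inj A a b : a \in A -> b \in A -> rk A a = rk A b -> a = b.
Proof.
move=> aA bA e; case: (ltngtP a b) => c.
- by have := rk_mono aA c; rewrite e ltnn.
- by have := rk_mono bA c; rewrite e ltnn.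
- exact: val_inj.
Qed.

Lemma rk_surj A j : j < #|A| -> exists2 a, a \in A & rk A a = j.
Proof.
move=> jA.
set L := [seq rk A a | a <- enum A].
have uL : uniq L.
  rewrite map_inj_in_uniq ?enum_uniq // => a b; rewrite !mem_enum; exact: rk_inj.
have sL : {subset L <= iota 0 #|A|}.
  by move=> k /mapP [a]; rewrite mem_enum mem_iota add0n => aA ->; rewrite rk_lt.
have sz : size (iota 0 #|A|) <= size L by rewrite size_iota size_map -cardE.
have [_ eL] := uniq_min_size uL sL sz.
have : j \in L by rewrite eL mem_iota.
by case/mapP => a; rewrite mem_enum => aA ->; exists a.
Qed.

Lemma rkO_some E a : a \in E -> exists a' : 'I_#|E|, rkO E a = Some a'.
Proof. by move=> aE; rewrite /rkO insubT ?rk_lt //= => h; eexists. Qed.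

Lemma rkO_val E a (a' : 'I_#|E|) : rkO E a = Some a' -> val a' = rk E a.
Proof. by rewrite /rkO; case: insubP => // u _ <- [<-]. Qed.

Definition Pos E x : {set 'I_n} := [set i | x i \in E].
Arguments Pos : clear implicits.

Lemma card_Pos E x : #|Pos E x| = #|E|.
Proof.
have -> : Pos E x = x @^-1: E by apply/setP => i; rewrite !inE.
apply: card_preimset; exact: perm_inj.
Qed.

Definition ltO : rel 'I_n := fun a b => a < b.

Lemma sorted_enum_ord : sorted ltO (enum 'I_n).
Proof. by have := iota_ltn_sorted 0 n; rewrite -val_enum_ord sorted_map. Qed.

Lemma nth_count_sorted (Q : seq 'I_n) i : sorted ltO Q -> i \in Q ->
  nth i Q (count (fun j : 'I_n => j < i) Q) = i.
Proof.
elim: Q => [|q Q IH] //= sQ; rewrite inE; have sQ' := path_sorted sQ.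
have allQ : all (ltO q) Q.
  by apply: (order_path_min (T:=_) (leT:=ltO)) sQ => a b c; apply: ltn_trans.
case/orP => [/eqP ->|iQ].
  rewrite ltnn add0n.
  have -> : count (fun j : 'I_n => j < q) Q = 0.
    apply/eqP; rewrite -leqn0 leqNgt -has_count; apply/hasP => [[j jQ]].
    by have := allP allQ j jQ; rewrite /ltO => qj /(ltn_trans qj); rewrite ltnn.
  by [].
have qi : q < i by have := allP allQ i iQ.
by rewrite qi add1n /= IH.
Qed.

Definition Qs E x := [seq i <- enum 'I_n | x i \in E].
Arguments Qs : clear implicits.

Lemma oneline_E E x : oneline E x = map (fun i => rk E (x i)) (Qs E x).
Proof. by []. Qed.

Lemma size_Qs E x : size (Qs E x) = #|E|.
Proof. by rewrite /Qs size_filter -(card_Pos E x) /Pos card_cnt. Qed.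

Lemma count_Qs E x (i : 'I_n) : count (fun j : 'I_n => j < i) (Qs E x) = rk (Pos E x) i.
Proof.
rewrite /Qs count_filter /rk /Pos.
rewrite -card_cnt; apply: eq_card => j; rewrite !inE /=; by rewrite andbC.
Qed.

Lemma oneline_nth E x (i : 'I_n) : x i \in E ->
  nth 0 (oneline E x) (rk (Pos E x) i) = rk E (x i).
Proof.
move=> xi; rewrite oneline_E (nth_map i); last first.
  by rewrite size_Qs -(card_Pos E x) rk_lt // inE.
rewrite -count_Qs nth_count_sorted //.
  apply: sorted_filter sorted_enum_ord; rewrite /ltO => a b c; exact: ltn_trans.
by rewrite mem_filter xi mem_enum.
Qed.

Definition Fo E x (j : 'I_#|E|) : 'I_#|E| := insubd j (nth 0 (oneline E x) j).
Arguments Fo : clear implicits.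

Lemma pos_surj E x (j : 'I_#|E|) : exists2 i, x i \in E & rk (Pos E x) i = j.
Proof.
have : (j : nat) < #|Pos E x| by rewrite card_Pos.
by case/rk_surj => i; rewrite inE => xi e; exists i.
Qed.

Lemma Fo_val E x (j : 'I_#|E|) (i : 'I_n) : x i \in E -> rk (Pos E x) i = j ->
  val (Fo E x j) = rk E (x i).
Proof.
move=> xi e; rewrite /Fo -e oneline_nth // insubdK //.
by rewrite unfold_in /= rk_lt.
Qed.

Lemma Fo_inj E x : injective (Fo E x).
Proof.
move=> j1 j2 e.
have [i1 xi1 e1] := pos_surj x j1; have [i2 xi2 e2] := pos_surj x j2.
have := congr1 val e; rewrite (Fo_val xi1 e1) (Fo_val xi2 e2) => /(rk_inj xi1 xi2).
by move/perm_inj => ei; apply: ord_inj; rewrite -e1 -e2 ei.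
Qed.

Lemma rE_val E x (j : 'I_#|E|) (i : 'I_n) : x i \in E -> rk (Pos E x) i = j ->
  val (rE E x j) = rk E (x i).
Proof.
move=> xi e; rewrite /rE /perm_or1; case: injectiveP => [inj|ninj].
  by rewrite permE; apply: Fo_val.
by case: ninj; apply: Fo_inj.
Qed.

Lemma pos_ord E x (i : 'I_n) : x i \in E -> exists j : 'I_#|E|, val j = rk (Pos E x) i.
Proof.
move=> xi; have lt : rk (Pos E x) i < #|E| by rewrite -(card_Pos E x) rk_lt // inE.
by exists (Ordinal lt).
Qed.

End Rank.

Section RE.
Variable n : nat.
Variable E : {set 'I_n}.
Implicit Types (a b c : 'I_n) (x y : 'S_n).

Lemma tperm_memE a b c : a \in E -> b \in E -> (tperm a b c \in E) = (c \in E).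
Proof. by move=> aE bE; case: tpermP => [->|->|]; rewrite ?aE ?bE. Qed.

Lemma rkO_inj a b (a' b' : 'I_#|E|) : a \in E -> b \in E ->
  rkO E a = Some a' -> rkO E b = Some b' -> (a' == b') = (a == b).
Proof.
move=> aE bE ha hb; apply/eqP/eqP => [e|eab]; last by move: ha; rewrite eab hb => -[].
by apply: (rk_inj aE bE); rewrite -(rkO_val ha) -(rkO_val hb) e.
Qed.

Lemma rkO_lt a b (a' b' : 'I_#|E|) : a \in E -> b \in E ->
  rkO E a = Some a' -> rkO E b = Some b' -> (a' < b') = (a < b).
Proof. by move=> aE bE ha hb; rewrite (rkO_val ha) (rkO_val hb) rk_ltE. Qed.

Lemma rk_tperm a b (a' b' : 'I_#|E|) c (c' : 'I_#|E|) : a \in E -> b \in E ->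
  rkO E a = Some a' -> rkO E b = Some b' -> c \in E -> val c' = rk E c ->
  val (tperm a' b' c') = rk E (tperm a b c).
Proof.
move=> aE bE ha hb cE ec.
case: (tpermP a b c) => [ea|eb|na nb].
- subst c; have -> : c' = a' by apply: val_inj; rewrite ec (rkO_val ha).
  by rewrite tpermL (rkO_val hb).
- subst c; have -> : c' = b' by apply: val_inj; rewrite ec (rkO_val hb).
  by rewrite tpermR (rkO_val ha).
- rewrite tpermD // ; apply/eqP => e.
  + by move: na; rewrite (rk_inj aE cE) ?eqxx // -(rkO_val ha) e ec.
  + by move: nb; rewrite (rk_inj bE cE) ?eqxx // -(rkO_val hb) e ec.
Qed.

Lemma Pos_tperm x a b : a \in E -> b \in E -> Pos E (x * tperm a b)%g = Pos E x.
Proof. by move=> aE bE; apply/setP => i; rewrite !inE permM tperm_memE. Qed.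

Lemma rE_tperm x a b (a' b' : 'I_#|E|) : a \in E -> b \in E ->
  rkO E a = Some a' -> rkO E b = Some b' ->
  rE E (x * tperm a b)%g = (rE E x * tperm a' b')%g.
Proof.
move=> aE bE ha hb; apply/permP => j; apply: val_inj.
have [i xi e] := pos_surj x j.
have xi' : (x * tperm a b)%g i \in E by rewrite permM tperm_memE.
have e' : rk (Pos E (x * tperm a b)%g) i = j by rewrite Pos_tperm.
rewrite (rE_val xi' e') !permM.
by rewrite (rk_tperm aE bE ha hb xi (rE_val xi e)).
Qed.

Lemma rEinv_val x a (a' : 'I_#|E|) : a \in E -> rkO E a = Some a' ->
  val ((rE E x)^-1%g a') = rk (Pos E x) ((x^-1)%g a).
Proof.
move=> aE ha; have xi : x ((x^-1)%g a) \in E by rewrite permKV.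
have [j ej] := pos_ord xi.
have : rE E x j = a'.
  by apply: val_inj; rewrite (rE_val xi (esym ej)) permKV (rkO_val ha).
by move=> <-; rewrite permK ej.
Qed.

Lemma rEinv_lt x a b (a' b' : 'I_#|E|) : a \in E -> b \in E ->
  rkO E a = Some a' -> rkO E b = Some b' ->
  ((rE E x)^-1%g a' < (rE E x)^-1%g b') = ((x^-1)%g a < (x^-1)%g b).
Proof.
move=> aE bE ha hb; rewrite (rEinv_val x aE ha) (rEinv_val x bE hb) rk_ltE //.
- by rewrite inE permKV.
- by rewrite inE permKV.
Qed.

Lemma is_transp_tperm m (a b : 'I_m) : a != b -> is_transp (tperm a b).
Proof. by move=> ab; apply/existsP; exists a; apply/existsP; exists b; rewrite ab eqxx. Qed.

Lemma bedge_rE x a b (a' b' : 'I_#|E|) : a \in E -> b \in E -> a != b ->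
  rkO E a = Some a' -> rkO E b = Some b' ->
  bedge (rE E x) (rE E (x * tperm a b)%g) = bedge x (x * tperm a b)%g.
Proof.
move=> aE bE ab ha hb; rewrite (rE_tperm x aE bE ha hb) /bedge !mulKg.
have ab' : a' != b' by rewrite (rkO_inj aE bE ha hb).
rewrite !is_transp_tperm //= !ell_tperm //.
by rewrite (rkO_lt aE bE ha hb) (rEinv_lt x aE bE ha hb).
Qed.

Definition Eperm (s : 'S_n) := forall c, c \notin E -> s c = c.

Lemma Eperm_mem s c : Eperm s -> (s c \in E) = (c \in E).
Proof.
move=> hs; case: (boolP (c \in E)) => cE; last by rewrite hs // (negbTE cE).
apply/negP => /negP h; move: (hs _ h) => /perm_inj e.
by move: cE; rewrite -e (negbTE h).
Qed.

Lemma rE_inj x y : Eperm (x^-1 * y)%g -> rE E x = rE E y -> x = y.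
Proof.
move=> hs e; set s := (x^-1 * y)%g in hs.
have ey : y = (x * s)%g by rewrite /s mulKVg.
have ep : Pos E y = Pos E x by apply/setP => i; rewrite !inE ey permM Eperm_mem.
apply/permP => i; case: (boolP (x i \in E)) => xi; last first.
  by rewrite ey permM hs.
have yi : y i \in E by rewrite ey permM Eperm_mem.
have [j ej] := pos_ord xi.
have ej' : rk (Pos E y) i = j by rewrite ep ej.
have := rE_val yi ej'; rewrite -e (rE_val xi (esym ej)).
by move/(rk_inj xi yi).
Qed.

End RE.

Section Cands.
Variable n : nat.
Implicit Types (a b c p q : 'I_n) (s t u v w x z : 'S_n).

Lemma is_transpP t : reflect (exists a b, a != b /\ t = tperm a b) (is_transp t).
Proof.
apply: (iffP existsP) => [[a /existsP [b /andP [ab /eqP ->]]]|[a [b [ab ->]]]].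
  by exists a, b.
by exists a; apply/existsP; exists b; rewrite ab eqxx.
Qed.

Lemma tperm_moved s p : is_transp s -> s p != p -> s = tperm p (s p).
Proof.
case/is_transpP => a [b [ab ->]]; case: (tpermP a b p) => [->|->|] //.
- by rewrite tpermC.
- by move=> _ _; rewrite eqxx.
Qed.

Lemma transp_neq1 t : is_transp t -> t != 1%g.
Proof.
case/is_transpP => a [b [ab ->]]; apply/eqP => /permP /(_ a).
by rewrite tpermL perm1 => e; move: ab; rewrite e eqxx.
Qed.

Lemma tperm_eqE a b c d : a != b -> tperm a b = tperm c d ->
  (c = a /\ d = b) \/ (c = b /\ d = a).
Proof.
move=> ab e.
have tr : is_transp (tperm c d).
  by rewrite -e; apply/is_transpP; exists a, b.
have cd : c != d by apply/eqP => cd; move: (transp_neq1 tr); rewrite cd tperm1 eqxx.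
have ea := congr1 (fun f : 'S_n => f a) e; move: ea => /=; rewrite tpermL.
case: (tpermP c d a) => [ac|ad|ac ad].
- by move=> ->; left.
- by move=> ->; right.
- by move=> ba; rewrite ba eqxx in ab.
Qed.

Lemma cand_form u v t : (u^-1 * v)%g != 1%g -> is_transp t ->
  is_transp (t * (u^-1 * v))%g ->
  exists p, (u^-1 * v)%g p != p /\ t = tperm p ((u^-1 * v)%g p).
Proof.
set w := (u^-1 * v)%g => w1 tt st.
case/is_transpP: tt => a [b [ab et]].
set s := (t * w)%g in st.
have sa : s a = w b by rewrite /s permM et tpermL.
have sb : s b = w a by rewrite /s permM et tpermR.
case: (eqVneq (w a) b) => [wa|wa].
  exists a; rewrite wa et; split=> //; by rewrite eq_sym.
case: (eqVneq (w b) a) => [wb|wb].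
  by exists b; rewrite wb et tpermC; split.
exfalso.
have sa' : s a != a by rewrite sa.
have sb' : s b != b by rewrite sb.
have es := tperm_moved st sa'.
have : s b = b.
  case: (eqVneq (s a) b) => [sab|sab].
    have : s = t by rewrite es sab et.
    move=> est; case/eqP: w1.
    by rewrite -[w](mulKg t) -/s est et tpermV tperm2.
  by rewrite es tpermD // eq_sym.
by move/eqP; rewrite (negbTE sb').
Qed.

Lemma tpermK' p q : (tperm p q * tperm p q)%g = 1%g.
Proof. exact: tperm2. Qed.

Lemma cand_cond u v q : let w := (u^-1 * v)%g in
  w (w q) != q -> w q != q ->
  bedge u (u * tperm q (w q))%g -> bedge (u * tperm q (w q))%g v ->
  ((q < w q) == ((u^-1)%g q < (u^-1)%g (w q))) /\
  ((q < w (w q)) == ((u^-1)%g (w q) < (u^-1)%g (w (w q)))).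
Proof.
move=> w wwq wq; set T := tperm q (w q).
rewrite /bedge mulKg => /andP [_ c1] /andP [st c2].
split; first by rewrite -ell_tperm // eq_sym.
set s := ((u * T)^-1 * v)%g in st.
have es : s = (T * w)%g by rewrite /s invMg tpermV -mulgA.
have sq : s q = w (w q) by rewrite es permM tpermL.
have sq' : s q != q by rewrite sq.
have ev : v = (u * T * tperm q (w (w q)))%g.
  by rewrite -sq -(tperm_moved st sq') /s mulKVg.
move: c2; rewrite {1}ev ell_tperm; last by rewrite eq_sym.
have inv_app : forall y, ((u * T)^-1)%g y = (u^-1)%g (T y).
  by move=> y; rewrite invMg tpermV permM.
rewrite !inv_app tpermL tpermD //; first by rewrite eq_sym.
by rewrite (inj_eq perm_inj) eq_sym.
Qed.

Lemma bedge_neq u z : bedge u z -> u != z.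
Proof.
by case/andP => _ lt; apply/eqP => e; move: lt; rewrite e ltnn.
Qed.

Lemma order3_contra (q0 q1 q2 r0 r1 r2 : nat) :
  q0 != q1 -> q1 != q2 -> q0 != q2 -> r0 != r1 -> r1 != r2 -> r0 != r2 ->
  (q0 < q1) == (r0 < r1) -> (q1 < q2) == (r1 < r2) -> (q2 < q0) == (r2 < r0) ->
  (q0 < q2) == (r1 < r2) -> (q1 < q0) == (r2 < r0) -> (q2 < q1) == (r0 < r1) -> False.
Proof.
case: (ltngtP q0 q1) => h1; case: (ltngtP q1 q2) => h2; case: (ltngtP q0 q2) => h3;
case: (ltngtP r0 r1) => h4; case: (ltngtP r1 r2) => h5; case: (ltngtP r0 r2) => h6;
rewrite ?eqxx //= ; try lia.
Qed.

End Cands.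

Section Two.
Variable n : nat.
Implicit Types (a b c p q : 'I_n) (s t u v w x z : 'S_n).

Definition candp u v p :=
  bedge u (u * tperm p ((u^-1 * v)%g p))%g && bedge (u * tperm p ((u^-1 * v)%g p))%g v.

Lemma cand_t u v z : (u^-1 * v)%g != 1%g -> bedge u z -> bedge z v ->
  exists p, [/\ (u^-1 * v)%g p != p, z = (u * tperm p ((u^-1 * v)%g p))%g,
     candp u v p & is_transp (tperm p ((u^-1 * v)%g p) * (u^-1 * v))%g].
Proof.
move=> w1 uz zv.
have tt : is_transp (u^-1 * z)%g by case/andP: uz.
have tv : (u^-1 * z)^-1%g = (u^-1 * z)%g.
  by case/is_transpP: tt => a [b [_ ->]]; rewrite tpermV.
have st : is_transp ((u^-1 * z) * (u^-1 * v))%g.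
  by rewrite -tv invMg invgK mulgA mulgK; case/andP: zv.
have [p [wp et]] := cand_form w1 tt st.
have ez : z = (u * tperm p ((u^-1 * v)%g p))%g by rewrite -et mulKVg.
exists p; split=> //; last by rewrite -et.
by rewrite /candp -ez uz zv.
Qed.

Lemma three_contra u v q0 :
  let w := (u^-1 * v)%g in
  w (w q0) != q0 -> w q0 != q0 -> w (w (w q0)) = q0 ->
  candp u v q0 -> candp u v (w q0) -> candp u v (w (w q0)) -> False.
Proof.
move=> w h2 h1 h3 /andP [a0 b0] /andP [a1 b1] /andP [a2 b2].
set q1 := w q0 in h2 h3 h1 a1 b1 a2 b2 a0 b0; set q2 := w q1 in h2 h3 a2 b2 a1 b1.
have n01 : q0 != q1 by rewrite eq_sym.
have n12 : q1 != q2 by rewrite /q2 /q1 (inj_eq (@perm_inj _ w)) eq_sym.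
have n02 : q0 != q2 by rewrite eq_sym.
have wq1 : w q1 != q1 by rewrite eq_sym.
have wwq1 : w (w q1) != q1 by rewrite -/q2 h3 eq_sym.
have wq2 : w q2 != q2 by rewrite h3.
have wwq2 : w (w q2) != q2 by rewrite h3 -/q1 eq_sym.
have [c01 c02] := cand_cond h2 h1 a0 b0.
have [c11 c12] := cand_cond wwq1 wq1 a1 b1.
have [c21 c22] := cand_cond wwq2 wq2 a2 b2.
rewrite -/w -/q1 -/q2 in c01 c02 c11 c12 c21 c22.
rewrite ?h3 in c11 c12 c21 c22.
rewrite -/q1 ?h3 in c21 c22.
rewrite -/q1 -/q2 ?h3 in c21 c22.
have inj : forall a b, a != b -> (u^-1)%g a != (u^-1)%g b by move=> a b; rewrite (inj_eq perm_inj).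
exact: (order3_contra n01 n12 n02 (inj _ _ n01) (inj _ _ n12) (inj _ _ n02) c01 c11 c21 c02 c12 c22).
Qed.

End Two.

Section Two2.
Variable n : nat.
Implicit Types (a b c p q : 'I_n) (s t u v w x z : 'S_n).

Lemma two_cands u v x z1 z2 : bedge u x -> bedge x v -> bedge u z1 -> bedge z1 v ->
  bedge u z2 -> bedge z2 v -> z1 != x -> z2 != x -> z1 = z2.
Proof.
move=> ux xv u1 v1 u2 v2 n1 n2.
have w1 : (u^-1 * v)%g != 1%g.
  apply/eqP => /eqP; rewrite -(inj_eq (mulgI u)) mulKVg mulg1 => /eqP e.
  move: ux xv; rewrite /bedge e => /andP [_ l1] /andP [_ l2].
  by move: (ltn_trans l1 l2); rewrite ltnn.
have [p0 [wp0 ex c0 s0]] := cand_t w1 ux xv.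
have [p1 [wp1 ez1 c1 _]] := cand_t w1 u1 v1.
have [p2 [wp2 ez2 c2 _]] := cand_t w1 u2 v2.
set w := (u^-1 * v)%g in wp0 ex c0 s0 wp1 ez1 c1 wp2 ez2 c2 w1.
case: (eqVneq z1 z2) => // n12; exfalso.
set T0 := tperm p0 (w p0) in ex s0.
have np0 : forall p, (u * tperm p (w p))%g != x -> p != p0.
  by move=> p h; apply/eqP => e; move: h; rewrite e -/T0 ex eqxx.
have nwp0 : w (w p0) = p0 -> forall p, (u * tperm p (w p))%g != x -> p != w p0.
  move=> hw p h; apply/eqP => e; move: h; rewrite e hw tpermC -/T0 ex eqxx.
  by [].
have p10 : p1 != p0 by apply: np0; rewrite -ez1.
have p20 : p2 != p0 by apply: np0; rewrite -ez2.
set s0' := (T0 * w)%g in s0.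
have ew : forall c, w c = s0' (T0 c).
  by move=> c; rewrite /s0' permM /T0 tpermK.
case: (eqVneq (w (w p0)) p0) => hw.
  have claim : forall p, p != p0 -> p != w p0 -> w p != p -> tperm p (w p) = s0'.
    move=> p h1 h2 h3.
    have sp : s0' p = w p by rewrite /s0' permM /T0 tpermD // eq_sym.
    by rewrite -sp -tperm_moved // sp.
  move/eqP: n12; apply.
  rewrite ez1 ez2 claim // ?claim //.
  - by apply: (nwp0 hw p2); rewrite -ez2.
  - by apply: (nwp0 hw p1); rewrite -ez1.
set q1 := w p0 in wp0 hw s0 ew p10 p20 ex c0 np0 nwp0; set q2 := w q1 in hw.
have wq1 : q2 != q1.
  by rewrite /q2 /q1 (inj_eq (@perm_inj _ w)).
have es0 : s0' = tperm p0 q2.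
  have : s0' p0 = q2 by rewrite /s0' permM /T0 tpermL.
  move=> e; have ne : s0' p0 != p0.
    apply/eqP => h; move/eqP: hw; apply; exact: (etrans (esym e) h).
  by rewrite (tperm_moved s0 ne) e.
have h3 : w q2 = p0.
  by rewrite ew /T0 tpermD ?es0 ?tpermR // eq_sym.
have supp : forall c, w c != c -> [|| c == p0, c == q1 | c == q2].
  move=> c; apply: contraR; rewrite !negb_or => /and3P [d0 d1 d2].
  by rewrite ew /T0 tpermD 1?eq_sym // es0 tpermD 1?eq_sym // eq_sym.
have pin : forall p, p != p0 -> w p != p -> (p == q1) || (p == q2).
  by move=> p h hp; move: (supp p hp); rewrite (negbTE h).
have := pin p1 p10 wp1; have := pin p2 p20 wp2.
case/orP => /eqP e2; case/orP => /eqP e1; subst p1 p2.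
- by case/eqP: n12; rewrite ez1 ez2.
- exact: (three_contra hw wp0 h3 c0 c2 c1).
- exact: (three_contra hw wp0 h3 c0 c1 c2).
- by case/eqP: n12; rewrite ez1 ez2.
Qed.

End Two2.

Section Aux.
Variables (n h : nat).
Implicit Types (G : h.+1.-tuple 'S_n).

Lemma vxE G (j : 'I_h.+1) : vx G j = tnth G j.
Proof. by rewrite /vx (tnth_nth 1%g). Qed.

Lemma vx_map m (f : 'S_n -> 'S_m) G j : j <= h -> vx (map_tuple f G) j = f (vx G j).
Proof. by move=> hj; rewrite /vx (nth_map 1%g) // size_tuple. Qed.

Lemma vx_fl G i z j : i <= h ->
  vx [tuple if val k == i then z else tnth G k | k < h.+1] j = if j == i then z else vx G j.
Proof.
move=> hi; case: (ltnP j h.+1) => hj.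
  by rewrite -[j]/(val (Ordinal hj)) vxE tnth_mktuple vxE.
rewrite /vx !nth_default ?size_tuple //.
by case: eqP => // e; move: hi; rewrite -e; lia.
Qed.

Lemma flip_cases G i : flip i G = G \/
  (0 < i < h /\ exists z, [/\ z != vx G i, bedge (vx G i.-1) z, bedge z (vx G i.+1) &
     flip i G = [tuple if val j == i then z else tnth G j | j < h.+1]]).
Proof.
rewrite /flip; case: ifP => hi; last by left.
case: pickP => [z /andP [/andP [zx e1] e2]|_]; last by left.
by right; split=> //; exists z.
Qed.

Lemma is_path_flip G i : is_path G -> is_path (flip i G).
Proof.
move=> pG; case: (flip_cases G i) => [->//|[/andP [i0 ih] [z [zx e1 e2 ->]]]].
apply/forallP => k; rewrite !vx_fl ?(ltnW ih) //.
case: (eqVneq (k : nat) i) => [ki|ki].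
  by rewrite ki gtn_eqF.
case: (eqVneq (k : nat).+1 i) => [ki'|ki'].
  by rewrite -ki' /= in e1.
exact: (forallP pG k).
Qed.

Lemma flip_vx0 G i : vx (flip i G) 0 = vx G 0.
Proof.
case: (flip_cases G i) => [->//|[/andP [i0 ih] [z [zx e1 e2 ->]]]].
by rewrite vx_fl ?(ltnW ih) // eq_sym (negbTE (lt0n_neq0 i0)).
Qed.

Lemma F_path G0 G : is_path G0 -> connect (@flipstep n h) G0 G ->
  is_path G /\ vx G 0 = vx G0 0.
Proof.
move=> p0 /connectP [p pp ->]; elim: p G0 p0 pp => [|G1 p IH] G' p' //= /andP [st pp].
case/existsP: st => i e.
have p1' : is_path G1 by rewrite (eqP e) is_path_flip.
have [p1 v1] := IH G1 p1' pp.
split=> //; rewrite v1 (eqP e) flip_vx0 //.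
Qed.

Lemma F_flip G0 G i : connect (@flipstep n h) G0 G -> connect (@flipstep n h) G0 (flip i G).
Proof.
move=> c; case: (flip_cases G i) => [->//|[/andP [i0 ih] _]].
apply: connect_trans c (connect1 _); apply/existsP; exists (Ordinal ih); by [].
Qed.

Lemma vx_succ G i : vx G i = (vx G i.-1 * lab G i)%g.
Proof. by rewrite /lab mulKVg. Qed.

End Aux.

Section EpermL.
Variable n : nat.
Variable E : {set 'I_n}.

Lemma Eperm1 : Eperm E 1%g.
Proof. by move=> c _; rewrite perm1. Qed.

Lemma Eperm_mul s t : Eperm E s -> Eperm E t -> Eperm E (s * t)%g.
Proof. by move=> hs ht c cE; rewrite permM hs // ht. Qed.

Lemma Eperm_inv s : Eperm E s -> Eperm E (s^-1)%g.
Proof. by move=> hs c cE; rewrite -{1}(hs c cE) permK. Qed.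

Lemma Eperm_tperm a b : a \in E -> b \in E -> Eperm E (tperm a b).
Proof.
move=> aE bE c cE; apply: tpermD; apply/eqP => e; move: cE; by rewrite -e ?aE ?bE.
Qed.

Lemma rkO_surj (a1 : 'I_#|E|) : exists2 a, a \in E & rkO E a = Some a1.
Proof.
have [a aE ea] := rk_surj (ltn_ord a1).
exists a => //; rewrite /rkO insubT ?rk_lt // => h; congr Some; apply: val_inj => /=.
by rewrite ea.
Qed.

End EpermL.

Section Main.
Variables (n h : nat) (G0 : h.+1.-tuple 'S_n).
Hypothesis pG0 : is_path G0.
Definition FF := [set G | connect (@flipstep n h) G0 G].
Local Notation F := FF.
Local Notation E := (EF F).
Implicit Types (G : h.+1.-tuple 'S_n).

Lemma F_is_path G : G \in F -> is_path G.
Proof. by rewrite inE => /(F_path pG0) []. Qed.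

Lemma F_vx0 G : G \in F -> vx G 0 = vx G0 0.
Proof. by rewrite inE => /(F_path pG0) []. Qed.

Lemma F_flipF G i : G \in F -> flip i G \in F.
Proof. by rewrite !inE => /F_flip. Qed.

Lemma moved_E G : G \in F -> moved G \subset E.
Proof. by move=> GF; rewrite /EF (bigcup_sup _ GF). Qed.

Lemma lab_E G i : G \in F -> 0 < i <= h ->
  exists a b, [/\ a \in E, b \in E, a != b & lab G i = tperm a b].
Proof.
move=> GF /andP [i0 ih]; have ih' : i.-1 < h by lia.
have := forallP (F_is_path GF) (Ordinal ih'); rewrite /= prednK // => /andP [tr _].
case/is_transpP: tr => a [b [ab el]]; rewrite -/(lab G i) in el.
have mv : forall c, lab G i c != c -> c \in E.
  move=> c hc; apply: (subsetP (moved_E GF)); rewrite inE; apply/existsP.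
  by exists (Ordinal ih'); rewrite /= prednK.
exists a, b; split=> //.
- by apply: mv; rewrite el tpermL eq_sym.
- by apply: mv; rewrite el tpermR.
Qed.

Lemma vx_Eperm G j : G \in F -> j <= h -> Eperm E ((vx G0 0)^-1 * vx G j)%g.
Proof.
move=> GF; elim: j => [_|j IH jh]; first by rewrite (F_vx0 GF) mulVg; exact: Eperm1.
rewrite (vx_succ G j.+1) /= mulgA; apply: Eperm_mul; first by apply: IH; lia.
have hj : 0 < j.+1 <= h by rewrite ltn0Sn jh.
have [a [b [aE bE _ ->]]] := lab_E GF hj.
exact: Eperm_tperm.
Qed.

Lemma vx_VS G j : G \in F -> j <= h -> vx G j \in VS F.
Proof.
move=> GF jh; rewrite inE; apply/existsP; exists G; rewrite GF /=.
by rewrite /vx mem_nth // size_tuple.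
Qed.

Lemma VS_Eperm x : x \in VS F -> Eperm E ((vx G0 0)^-1 * x)%g.
Proof.
rewrite inE => /existsP [G /andP [GF /tnthP [j ->]]].
by rewrite -vxE; apply: vx_Eperm => //; rewrite -ltnS.
Qed.

Lemma rE_injVS : {in VS F &, injective (rE E)}.
Proof.
move=> x y xV yV; apply: rE_inj.
have -> : (x^-1 * y)%g = (((vx G0 0)^-1 * x)^-1 * ((vx G0 0)^-1 * y))%g.
  by rewrite invMg invgK mulgA mulgK.
by apply: Eperm_mul; [apply: Eperm_inv|]; apply: VS_Eperm.
Qed.

End Main.

Section Main2.
Variables (n h : nat) (G0 : h.+1.-tuple 'S_n).
Hypothesis pG0 : is_path G0.
Local Notation F := (FF G0).
Local Notation E := (EF F).
Implicit Types (G : h.+1.-tuple 'S_n).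

Lemma vx_Eperm2 G j k : G \in F -> j <= h -> k <= h ->
  Eperm E ((vx G j)^-1 * vx G k)%g.
Proof.
move=> GF jh kh.
have -> : ((vx G j)^-1 * vx G k)%g =
  (((vx G0 0)^-1 * vx G j)^-1 * ((vx G0 0)^-1 * vx G k))%g.
  by rewrite invMg invgK mulgA mulgK.
by apply: Eperm_mul; [apply: Eperm_inv|]; apply: vx_Eperm.
Qed.

Lemma path_edge G j : G \in F -> j < h -> bedge (vx G j) (vx G j.+1).
Proof. by move=> GF jh; exact: (forallP (F_is_path pG0 GF) (Ordinal jh)). Qed.

Lemma cand_E G i z : G \in F -> 0 < i < h ->
  bedge (vx G i.-1) z -> bedge z (vx G i.+1) ->
  (exists a b, [/\ a \in E, b \in E, a != b & z = (vx G i.-1 * tperm a b)%g]) /\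
  (exists c d, [/\ c \in E, d \in E, c != d & vx G i.+1 = (z * tperm c d)%g]).
Proof.
move=> GF /andP [i0 ih] uz zv.
set u := vx G i.-1 in uz *; set v := vx G i.+1 in zv *.
have Ew : Eperm E (u^-1 * v)%g by apply: vx_Eperm2 => //; lia.
have w1 : (u^-1 * v)%g != 1%g.
  apply/eqP => /eqP; rewrite -(inj_eq (mulgI u)) mulKVg mulg1 => /eqP e.
  have ih1 : i.-1 < h by lia.
  have e1 := path_edge GF ih1; rewrite prednK // in e1.
  have e2 := path_edge GF ih.
  move: e1 e2; rewrite /bedge -/u -/v e => /andP [_ l1] /andP [_ l2].
  by move: (ltn_trans l1 l2); rewrite ltnn.
have [p [wp ez _ st]] := cand_t w1 uz zv.
set w := (u^-1 * v)%g in Ew wp ez st w1.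
have pE : p \in E by apply: contraR wp => pE; rewrite Ew.
have wpE : w p \in E by rewrite Eperm_mem.
split; first by exists p, (w p); split=> //; rewrite eq_sym.
set s := (tperm p (w p) * w)%g in st.
have Es : Eperm E s by apply: Eperm_mul => //; apply: Eperm_tperm.
case/is_transpP: st => c [d [cd es]].
have mv : forall e, s e != e -> e \in E by move=> e; apply: contraR => eE; rewrite Es.
exists c, d; split=> //.
- by apply: mv; rewrite es tpermL eq_sym.
- by apply: mv; rewrite es tpermR.
- by rewrite -es ez /s mulgA -(mulgA u) tperm2 mulg1 /w mulKVg.
Qed.

End Main2.

Section Main3.
Variables (n h : nat) (G0 : h.+1.-tuple 'S_n).
Hypothesis pG0 : is_path G0.
Local Notation F := (FF G0).
Local Notation E := (EF F).
Implicit Types (G : h.+1.-tuple 'S_n).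

Lemma inj_coset u z1 z2 : Eperm E (u^-1 * z1)%g -> Eperm E (u^-1 * z2)%g ->
  rE E z1 = rE E z2 -> z1 = z2.
Proof.
move=> h1 h2; apply: rE_inj.
have -> : (z1^-1 * z2)%g = ((u^-1 * z1)^-1 * (u^-1 * z2))%g.
  by rewrite invMg invgK mulgA mulgK.
by apply: Eperm_mul => //; apply: Eperm_inv.
Qed.

Lemma flip_comm G i : G \in F ->
  map_tuple (rE E) (flip i G) = flip i (map_tuple (rE E) G).
Proof.
move=> GF; rewrite /flip; case: ifP => hi //.
have /andP [i0 ih] := hi.
rewrite !vx_map ?(ltnW ih) //; last by lia.
set u := vx G i.-1; set x := vx G i; set v := vx G i.+1.
have ih1 : i.-1 < h by lia.
have ux : bedge u x by have := path_edge pG0 GF ih1; rewrite prednK.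
have xv : bedge x v by have := path_edge pG0 GF ih.
have Ex : Eperm E (u^-1 * x)%g by apply: vx_Eperm2 => //; lia.
have Ev : Eperm E (u^-1 * v)%g by apply: vx_Eperm2 => //; lia.
have hi' : 0 < i < h by [].
have EC : forall z, bedge u z -> bedge z v -> Eperm E (u^-1 * z)%g.
  move=> z uz zv; have [[a [b [aE bE _ ->]]] _] := cand_E pG0 GF hi' uz zv.
  by rewrite mulKg; apply: Eperm_tperm.
have K2 : forall z, bedge u z -> bedge z v ->
    bedge (rE E u) (rE E z) && bedge (rE E z) (rE E v).
  move=> z uz zv.
  have [[a [b [aE bE ab ez]]] [c [d [cE dE cd ev]]]] := cand_E pG0 GF hi' uz zv.
  have [a' ha] := rkO_some aE; have [b' hb] := rkO_some bE.
  have [c' hc] := rkO_some cE; have [d' hd] := rkO_some dE.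
  rewrite -/u -/v in ez ev.
  rewrite ev (bedge_rE z cE dE cd hc hd) -ev zv andbT.
  by rewrite ez (bedge_rE u aE bE ab ha hb) -ez.
have K3 : forall z', bedge (rE E u) z' -> bedge z' (rE E v) ->
    exists z, [/\ bedge u z, bedge z v & z' = rE E z].
  move=> z' uz' zv'.
  have /is_transpP [a1 [b1 [ab1 e1]]] : is_transp ((rE E u)^-1 * z')%g by case/andP: uz'.
  have [a aE ha] := rkO_surj a1; have [b bE hb] := rkO_surj b1.
  have ab : a != b by rewrite -(rkO_inj aE bE ha hb).
  set z := (u * tperm a b)%g.
  have ez : rE E z = z' by rewrite /z (rE_tperm u aE bE ha hb) -e1 mulKVg.
  have /is_transpP [c1 [d1 [cd1 e2]]] : is_transp (z'^-1 * rE E v)%g by case/andP: zv'.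
  have [c cE hc] := rkO_surj c1; have [d dE hd] := rkO_surj d1.
  have cd : c != d by rewrite -(rkO_inj cE dE hc hd).
  have ev : v = (z * tperm c d)%g.
    apply: (inj_coset (u := u)) => //.
      by rewrite /z -mulgA mulKg; apply: Eperm_mul; apply: Eperm_tperm.
    by rewrite (rE_tperm z cE dE hc hd) ez -e2 mulKVg.
  exists z; split=> //.
  - by rewrite -(bedge_rE u aE bE ab ha hb) -/z ez.
  - by rewrite ev -(bedge_rE z cE dE cd hc hd) -ev ez.
case: pickP => [z /andP [/andP [zx uz] zv]|P0]; case: pickP => [z' /andP [/andP [zx' uz'] zv']|P0'].
- have [z2 [uz2 z2v ez2]] := K3 z' uz' zv'.
  have z2x : z2 != x by apply: contraNneq zx' => e; rewrite ez2 e.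
  have e : z2 = z := two_cands ux xv uz2 z2v uz zv z2x zx.
  subst z' z2; apply: eq_from_tnth => j.
  by rewrite tnth_map !tnth_mktuple; case: ifP => //; rewrite tnth_map.
- exfalso; have /andP [k1 k2] := K2 z uz zv.
  move: (P0' (rE E z)); rewrite /= k1 k2 !andbT => /negbT; rewrite negbK => /eqP e.
  by move/eqP: zx; apply; apply: (inj_coset (u := u)) => //; apply: EC.
- exfalso; have [z2 [uz2 z2v ez2]] := K3 z' uz' zv'.
  move: (P0 z2); rewrite /= uz2 z2v !andbT => /negbT; rewrite negbK => /eqP e.
  by move: zx'; rewrite ez2 e eqxx.
- by [].
Qed.

End Main3.

Section Main4.
Variables (n h : nat) (G0 : h.+1.-tuple 'S_n).
Hypothesis pG0 : is_path G0.
Local Notation F := (FF G0).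
Local Notation E := (EF F).
Implicit Types (G : h.+1.-tuple 'S_n).

Definition gl (t : 'S_n) : 'S_#|E| := ((rE E 1)^-1 * rE E t)%g.

Definition Etr (t : 'S_n) : bool :=
  [exists a, exists b, [&& a \in E, b \in E, a != b & t == tperm a b]].

Lemma EtrP t : reflect (exists a b, [/\ a \in E, b \in E, a != b & t = tperm a b]) (Etr t).
Proof.
apply: (iffP existsP) => [[a /existsP [b /and4P [aE bE ab /eqP ->]]]|[a [b [aE bE ab ->]]]].
  by exists a, b.
by exists a; apply/existsP; exists b; rewrite aE bE ab eqxx.
Qed.

Lemma gl_tperm a b (a' b' : 'I_#|E|) : a \in E -> b \in E ->
  rkO E a = Some a' -> rkO E b = Some b' -> gl (tperm a b) = tperm a' b'.
Proof.
move=> aE bE ha hb; rewrite /gl -{1}(mul1g (tperm a b)) (rE_tperm 1 aE bE ha hb).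
by rewrite mulKg.
Qed.

Lemma Etr_tperm t a b : Etr t -> t = tperm a b -> a != b -> a \in E /\ b \in E.
Proof.
case/EtrP => a0 [b0 [aE bE ab0 ->]] e ab.
by case: (tperm_eqE ab0 e) => [[-> ->]|[-> ->]].
Qed.

Lemma lab_Etr G i : G \in F -> 0 < i <= h -> Etr (lab G i).
Proof. by move=> GF hi; apply/EtrP; apply: lab_E. Qed.

Lemma lab_rEp G i a b (a' b' : 'I_#|E|) : G \in F -> 0 < i <= h ->
  lab G i = tperm a b -> a \in E -> b \in E -> rkO E a = Some a' -> rkO E b = Some b' ->
  lab (map_tuple (rE E) G) i = tperm a' b'.
Proof.
move=> GF /andP [i0 ih] el aE bE ha hb.
rewrite /lab !vx_map //; last by lia.
by rewrite [vx G i](vx_succ G i) el (rE_tperm _ aE bE ha hb) mulKg.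
Qed.

Lemma lab_g G i : G \in F -> 0 < i <= h -> lab (map_tuple (rE E) G) i = gl (lab G i).
Proof.
move=> GF hi; have [a [b [aE bE ab el]]] := lab_E pG0 GF hi.
have [a' ha] := rkO_some aE; have [b' hb] := rkO_some bE.
by rewrite (lab_rEp GF hi el aE bE ha hb) el (gl_tperm aE bE ha hb).
Qed.

Lemma isrE a b (a' b' : 'I_#|E|) s : rkO E a = Some a' -> rkO E b = Some b' ->
  s = tperm a' b' -> is_rE_transp E a b s.
Proof. by move=> ha hb ->; rewrite /is_rE_transp ha hb eqxx. Qed.

Lemma Etr_isrE t a b : Etr t -> t = tperm a b -> a != b -> is_rE_transp E a b (gl t).
Proof.
move=> et e ab; have [aE bE] := Etr_tperm et e ab.
have [a' ha] := rkO_some aE; have [b' hb] := rkO_some bE.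
by apply: (isrE ha hb); rewrite e (gl_tperm aE bE ha hb).
Qed.

Lemma tperm_neq (a b : 'I_n) t : is_transp t -> t = tperm a b -> a != b.
Proof.
move=> tt e; apply/eqP => ab; move: (transp_neq1 tt); by rewrite e ab tperm1 eqxx.
Qed.

Lemma edge_lab G j : G \in F -> j < h ->
  Etr ((vx G j)^-1 * vx G j.+1)%g /\
  ((rE E (vx G j))^-1 * rE E (vx G j.+1))%g = gl ((vx G j)^-1 * vx G j.+1)%g.
Proof.
move=> GF jh; have hj : 0 < j.+1 <= h by rewrite ltn0Sn jh.
have := lab_Etr GF hj; rewrite /lab /= => -> ; split=> //.
by have := lab_g GF hj; rewrite /lab /= !vx_map // ltnW.
Qed.


Lemma gl_inj : {in Etr &, injective gl}.
Proof.
move=> t u /EtrP [a [b [aE bE ab ->]]] /EtrP [c [d [cE dE cd ->]]].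
have [a' ha] := rkO_some aE; have [b' hb] := rkO_some bE.
have [c' hc] := rkO_some cE; have [d' hd] := rkO_some dE.
rewrite (gl_tperm aE bE ha hb) (gl_tperm cE dE hc hd) => e.
have ab' : a' != b' by rewrite (rkO_inj aE bE ha hb).
case: (tperm_eqE ab' e) => [[e1 e2]|[e1 e2]].
- have := rkO_inj cE aE hc ha; rewrite e1 eqxx => /esym/eqP ->.
  by have := rkO_inj dE bE hd hb; rewrite e2 eqxx => /esym/eqP ->.
- have := rkO_inj cE bE hc hb; rewrite e1 eqxx => /esym/eqP ->.
  by have := rkO_inj dE aE hd ha; rewrite e2 eqxx => /esym/eqP ->; rewrite tpermC.
Qed.

Lemma isrE_inv a b a1 b1 (a' b' : 'I_#|E|) : a \in E -> b \in E -> a1 \in E -> b1 \in E ->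
  a != b -> rkO E a = Some a' -> rkO E b = Some b' ->
  is_rE_transp E a1 b1 (tperm a' b') -> tperm a1 b1 = tperm a b.
Proof.
move=> aE bE a1E b1E ab ha hb.
have [a1' ha1] := rkO_some a1E; have [b1' hb1] := rkO_some b1E.
rewrite /is_rE_transp ha1 hb1 => /eqP e.
have ab' : a' != b' by rewrite (rkO_inj aE bE ha hb).
case: (tperm_eqE ab' e) => [[e1 e2]|[e1 e2]].
- have := rkO_inj a1E aE ha1 ha; rewrite e1 eqxx => /esym/eqP ->.
  by have := rkO_inj b1E bE hb1 hb; rewrite e2 eqxx => /esym/eqP ->.
- have := rkO_inj a1E bE ha1 hb; rewrite e1 eqxx => /esym/eqP ->.
  by have := rkO_inj b1E aE hb1 ha; rewrite e2 eqxx => /esym/eqP ->; rewrite tpermC.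
Qed.

Lemma rle_g (le : rel 'S_n) t u : Etr t -> Etr u -> rE_order E le (gl t) (gl u) = le t u.
Proof.
move=> /EtrP [a [b [aE bE ab et]]] /EtrP [c [d [cE dE cd eu]]].
have [a' ha] := rkO_some aE; have [b' hb] := rkO_some bE.
have [c' hc] := rkO_some cE; have [d' hd] := rkO_some dE.
rewrite et eu (gl_tperm aE bE ha hb) (gl_tperm cE dE hc hd).
apply/idP/idP.
  case/existsP => a1 /existsP [b1 /existsP [c1 /existsP [d1]]].
  move=> /andP [/andP [/andP [/andP [/andP [/andP [a1E b1E] c1E] d1E] i1] i2] l].
  by rewrite -(isrE_inv aE bE a1E b1E ab ha hb i1) -(isrE_inv cE dE c1E d1E cd hc hd i2).
move=> l; apply/existsP; exists a; apply/existsP; exists b; apply/existsP; exists c.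
apply/existsP; exists d; rewrite aE bE cE dE l /= andbT.
by rewrite (isrE ha hb erefl) (isrE hc hd erefl).
Qed.

End Main4.

Section Main5.
Variables (n h : nat) (G0 : h.+1.-tuple 'S_n).
Hypothesis pG0 : is_path G0.
Local Notation F := (FF G0).
Local Notation E := (EF F).
Local Notation rEp := (fun G : h.+1.-tuple 'S_n => map_tuple (rE E) G).
Local Notation F' := [set map_tuple (rE E) G | G in F].
Implicit Types (G : h.+1.-tuple 'S_n).

Lemma G0F : G0 \in F.
Proof. by rewrite inE connect0. Qed.

Lemma rEp_path G : G \in F -> is_path (map_tuple (rE E) G).
Proof.
move=> GF; apply/forallP => k; rewrite !vx_map ?(ltnW (ltn_ord k)) //.
have hk : 0 < k.+1 <= h by rewrite ltn0Sn ltn_ord.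
have [a [b [aE bE ab el]]] := lab_E pG0 GF hk.
have [a' ha] := rkO_some aE; have [b' hb] := rkO_some bE.
have ev : vx G k.+1 = (vx G k * tperm a b)%g by rewrite (vx_succ G k.+1) el.
rewrite ev (bedge_rE _ aE bE ab ha hb) -ev.
by have := path_edge pG0 GF (ltn_ord k).
Qed.

Lemma tnth_VS G j : G \in F -> tnth G j \in VS F.
Proof. by move=> GF; rewrite -vxE vx_VS // -ltnS. Qed.

Lemma rEp_inj : {in F &, injective (fun G => map_tuple (rE E) G)}.
Proof.
move=> G1 G2 G1F G2F e; apply: eq_from_tnth => j.
have := congr1 (fun T => tnth T j) e; rewrite /= !tnth_map.
by apply: (rE_injVS pG0); apply: tnth_VS.
Qed.

Lemma flipstep_rE G1 G2 : G1 \in F -> flipstep G1 G2 ->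
  G2 \in F /\ flipstep (map_tuple (rE E) G1) (map_tuple (rE E) G2).
Proof.
move=> G1F /existsP [i /eqP ->]; split; first exact: F_flipF.
by apply/existsP; exists i; rewrite flip_comm.
Qed.

Lemma F'_flipclass : is_flipclass F'.
Proof.
exists (map_tuple (rE E) G0); split; first exact: rEp_path G0F.
apply/setP => G'; rewrite inE; apply/idP/idP.
  case/imsetP => G; rewrite inE => /connectP [p pp ->] ->.
  have K : forall (p : seq (h.+1.-tuple 'S_n)) G1, G1 \in F -> path (@flipstep n h) G1 p ->
      connect (@flipstep _ h) (map_tuple (rE E) G1) (map_tuple (rE E) (last G1 p)).
    elim=> [|G2 q IH] G1 G1F //= /andP [st pp'].
    have [G2F st'] := flipstep_rE G1F st.
    exact: connect_trans (connect1 st') (IH _ G2F pp').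
  exact: K G0F pp.
case/connectP => p pp ->.
have K : forall (p : seq (h.+1.-tuple 'S_#|E|)) G1, G1 \in F ->
    path (@flipstep #|E| h) (map_tuple (rE E) G1) p ->
    last (map_tuple (rE E) G1) p \in F'.
  elim=> [|G2' q IH] G1 G1F /=; first by move=> _; apply: imset_f.
  case/andP => st pp'.
  case/existsP: st => i /eqP e1; rewrite e1 -flip_comm // in pp' *.
  by apply: IH => //; exact: F_flipF.
exact: K G0F pp.
Qed.

End Main5.


Section Main6.
Variables (n h : nat) (G0 : h.+1.-tuple 'S_n).
Hypothesis pG0 : is_path G0.
Local Notation F := (FF G0).
Local Notation E := (EF F).
Local Notation F' := [set map_tuple (rE E) G | G in F].
Implicit Types (G : h.+1.-tuple 'S_n).

Lemma F'P (G' : h.+1.-tuple 'S_#|E|) :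
  reflect (exists2 G, G \in F & G' = map_tuple (rE E) G) (G' \in F').
Proof. exact: imsetP. Qed.

Lemma VS_img : rE E @: VS F = VS F'.
Proof.
apply/setP => x'; apply/imsetP/idP.
  case=> x; rewrite inE => /existsP [G /andP [GF xG]] ->.
  rewrite inE; apply/existsP; exists (map_tuple (rE E) G); rewrite imset_f //=.
  by apply: map_f.
rewrite inE => /existsP [G' /andP [/F'P [G GF ->] /mapP [x xG ->]]].
by exists x => //; rewrite inE; apply/existsP; exists G; rewrite GF.
Qed.

Lemma ES_iso : {in VS F &, forall x y, ES F x y = ES F' (rE E x) (rE E y)}.
Proof.
move=> x y xV yV; apply/existsP/existsP.
  case=> G /andP [GF /existsP [i /andP [/eqP ex /eqP ey]]].
  exists (map_tuple (rE E) G); rewrite imset_f //=; apply/existsP; exists i.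
  have hi : (i : nat) <= h := ltnW (ltn_ord i).
  have hi' : (i : nat).+1 <= h := ltn_ord i.
  by rewrite (vx_map _ _ hi) (vx_map _ _ hi') ex ey !eqxx.
case=> G' /andP [/F'P [G GF ->] /existsP [i /andP [/eqP ex /eqP ey]]].
have hi : (i : nat) <= h := ltnW (ltn_ord i).
have hi' : (i : nat).+1 <= h := ltn_ord i.
move: ex ey; rewrite (vx_map _ _ hi) (vx_map _ _ hi') => ex ey.
exists G; rewrite GF /=; apply/existsP; exists i.
have v1 : vx G i \in VS F by apply: vx_VS.
have v2 : vx G i.+1 \in VS F by apply: vx_VS.
by rewrite (rE_injVS pG0 v1 xV ex) (rE_injVS pG0 v2 yV ey) !eqxx.
Qed.

Lemma ES_lab x y : ES F x y ->
  Etr G0 (x^-1 * y)%g /\ ((rE E x)^-1 * rE E y)%g = gl G0 (x^-1 * y)%g.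
Proof.
case/existsP => G /andP [GF /existsP [i /andP [/eqP <- /eqP <-]]].
exact: edge_lab.
Qed.

Lemma VTS_inj : {in VTS F &, injective (fun p : 'S_n * 'I_h.+1 => (rE E p.1, p.2))}.
Proof.
move=> [x j] [y k]; rewrite !inE /= => /existsP [G1 /andP [G1F /eqP e1]].
move=> /existsP [G2 /andP [G2F /eqP e2]] [e ->]; congr pair.
apply: (rE_injVS pG0) e; [rewrite -e1 | rewrite -e2]; exact: tnth_VS.
Qed.

Lemma VTS_img : [set (rE E p.1, p.2) | p in VTS F] = VTS F'.
Proof.
apply/setP => [[x' j]]; apply/imsetP/idP.
  case=> [[x k]]; rewrite inE => /existsP [G /andP [GF /eqP e]] [-> ->].
  rewrite inE; apply/existsP; exists (map_tuple (rE E) G); rewrite imset_f //=.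
  by rewrite tnth_map e.
rewrite inE => /existsP [G' /andP [/F'P [G GF ->] /eqP /= e]].
exists (tnth G j, j); last by rewrite /= -e tnth_map.
by rewrite inE; apply/existsP; exists G; rewrite GF eqxx.
Qed.

Lemma ETS_iso : {in VTS F &, forall p q, ETS F p q =
    ETS F' ((fun p : 'S_n * 'I_h.+1 => (rE E p.1, p.2)) p)
           ((fun p : 'S_n * 'I_h.+1 => (rE E p.1, p.2)) q)}.
Proof.
move=> [x j] [y k]; rewrite !inE /= => /existsP [G1 /andP [G1F /eqP e1]].
move=> /existsP [G2 /andP [G2F /eqP e2]].
have xV : x \in VS F by rewrite -e1; exact: tnth_VS.
have yV : y \in VS F by rewrite -e2; exact: tnth_VS.
rewrite /ETS /=; congr andb; apply/existsP/existsP.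
  case=> G /andP [GF /andP [/eqP ex /eqP ey]].
  exists (map_tuple (rE E) G); rewrite imset_f //=.
  by rewrite !tnth_map ex ey !eqxx.
case=> G' /andP [/F'P [G GF ->] /andP [/eqP ex /eqP ey]].
move: ex ey; rewrite !tnth_map => ex ey.
exists G; rewrite GF /=.
have v1 : tnth G j \in VS F by exact: tnth_VS.
have v2 : tnth G k \in VS F by exact: tnth_VS.
by rewrite (rE_injVS pG0 v1 xV ex) (rE_injVS pG0 v2 yV ey) !eqxx.
Qed.

Lemma ETS_lab p q : ETS F p q ->
  Etr G0 (p.1^-1 * q.1)%g /\ ((rE E p.1)^-1 * rE E q.1)%g = gl G0 (p.1^-1 * q.1)%g.
Proof.
case/andP => /eqP eq /existsP [G /andP [GF /andP [/eqP ep /eqP eq']]].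
have jh : (p.2 : nat) < h by rewrite -ltnS -eq ltn_ord.
have -> : p.1 = vx G p.2 by rewrite -ep vxE.
have -> : q.1 = vx G (p.2 : nat).+1 by rewrite -eq' -eq vxE.
exact: edge_lab.
Qed.

End Main6.

Section Final.
Variables (n h : nat) (G0 : h.+1.-tuple 'S_n).
Hypothesis pG0 : is_path G0.
Local Notation F := (FF G0).
Local Notation E := (EF F).
Local Notation F' := [set map_tuple (rE E) G | G in F].
Implicit Types (G : h.+1.-tuple 'S_n).

Lemma Etr_neq t a b : Etr G0 t -> t = tperm a b -> a != b.
Proof.
case/EtrP => a0 [b0 [_ _ ab0 e0]] e; apply/eqP => ab.
have : is_transp t by apply/is_transpP; exists a0, b0.
by move/transp_neq1; rewrite e ab tperm1 eqxx.
Qed.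

Lemma LS_Etr t : t \in LS F -> Etr G0 t.
Proof.
rewrite inE => /existsP [G /andP [GF /existsP [i /eqP <-]]].
by apply: (lab_Etr pG0 GF); rewrite ltn0Sn ltn_ord.
Qed.

Lemma LS_img : gl G0 @: LS F = LS F'.
Proof.
apply/setP => t'; apply/imsetP/idP.
  case=> t; rewrite inE => /existsP [G /andP [GF /existsP [i /eqP <-]]] ->.
  rewrite inE; apply/existsP; exists (map_tuple (rE E) G); rewrite imset_f //=.
  apply/existsP; exists i; rewrite (lab_g pG0 GF) //.
  by rewrite ltn0Sn ltn_ord.
rewrite inE => /existsP [G' /andP [/F'P [G GF ->] /existsP [i /eqP <-]]].
exists (lab G i.+1); last by rewrite (lab_g pG0 GF) // ltn0Sn ltn_ord.
by rewrite inE; apply/existsP; exists G; rewrite GF /=; apply/existsP; exists i.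
Qed.

Lemma lex_g t u : t \in LS F -> u \in LS F -> lexlt t u -> lexlt (gl G0 t) (gl G0 u).
Proof.
move=> /LS_Etr et /LS_Etr eu.
case/existsP => a /existsP [b /existsP [c /existsP [d]]].
case/and5P => ab cd /eqP etab /eqP eucd lx.
have ab' : a != b by rewrite neq_ltn ab.
have cd' : c != d by rewrite neq_ltn cd.
have [aE bE] := Etr_tperm et etab ab'.
have [cE dE] := Etr_tperm eu eucd cd'.
have [a' ha] := rkO_some aE; have [b' hb] := rkO_some bE.
have [c' hc] := rkO_some cE; have [d' hd] := rkO_some dE.
rewrite etab eucd (gl_tperm aE bE ha hb) (gl_tperm cE dE hc hd).
apply/existsP; exists a'; apply/existsP; exists b'; apply/existsP; exists c'.
apply/existsP; exists d'.
rewrite (rkO_lt aE bE ha hb) (rkO_lt cE dE hc hd) ab cd !eqxx /=.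
by rewrite (rkO_lt aE cE ha hc) (rkO_inj aE cE ha hc) (rkO_lt bE dE hb hd).
Qed.

End Final.


Theorem lemma6p9 (n h : nat) (F : {set h.+1.-tuple 'S_n}) :
  is_flipclass F ->
  let E := EF F in
  let rEp := fun G : h.+1.-tuple 'S_n => map_tuple (rE E) G in
  let F' := [set rEp G | G in F] in
  [/\ (* (1) *)
      [/\ is_flipclass F',
          {in F &, injective rEp},
          (forall G i, G \in F -> rEp (flip i G) = flip i (rEp G)) &
          (forall G i a b, G \in F -> 1 <= i <= h -> lab G i = tperm a b ->
             is_rE_transp E a b (lab (rEp G) i))],
      (* (2) *)
      [/\ graph_iso (VS F) (ES F) (VS F') (ES F') (rE E),
          (forall x y a b, ES F x y -> (x^-1 * y)%g = tperm a b ->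
             is_rE_transp E a b ((rE E x)^-1 * rE E y)%g),
          graph_iso (VTS F) (ETS F) (VTS F') (ETS F')
                    (fun p => (rE E p.1, p.2)) &
          (forall p q a b, ETS F p q -> (p.1^-1 * q.1)%g = tperm a b ->
             is_rE_transp E a b ((rE E p.1)^-1 * rE E q.1)%g)],
      (* (3) *)
      (forall le : rel 'S_n, refl_order le ->
         [/\ (forall G, G \in F -> incr_path le G = incr_path (rE_order E le) (rEp G)),
             (forall x0 s, path (ES F) x0 s ->
                sorted le (labs x0 s) =
                sorted (rE_order E le) (labs (rE E x0) (map (rE E) s))) &
             (forall p0 s, path (ETS F) p0 s ->
                sorted le (labs p0.1 (map fst s)) =
                sorted (rE_order E le)
                  (labs (rE E p0.1) (map (fun p => rE E p.1) s)))]) &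
      (* (4) *)
      (exists g : 'S_n -> 'S_#|E|,
         (forall a b, a \in E -> b \in E -> a != b ->
            is_rE_transp E a b (g (tperm a b))) /\
         flip_iso F F' (rE E) g)].
Proof.
case=> G0 [pG0 eF].
have {eF} -> : F = FF G0 by rewrite eF.
move=> E rEp F'; rewrite {}/F' {}/rEp {}/E.
have et_ab : forall t a b, Etr G0 t -> t = tperm a b -> is_rE_transp (EF (FF G0)) a b (gl G0 t).
  by move=> t a b et e; apply: (Etr_isrE et e); exact: Etr_neq et e.
split.
- split.
  + exact: F'_flipclass pG0.
  + exact: rEp_inj pG0.
  + by move=> G i GF; have := flip_comm pG0 i GF.
  + move=> G i a b GF hi el; rewrite (lab_g pG0 GF hi).
    by apply: et_ab el; have := lab_Etr pG0 GF hi.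
- split.
  + by split; [exact: rE_injVS pG0 | exact: VS_img | exact: ES_iso pG0].
  + move=> x y a b es e; have [et ->] := ES_lab pG0 es; exact: et_ab et e.
  + by split; [exact: VTS_inj pG0 | exact: VTS_img | exact: ETS_iso pG0].
  + move=> p q a b es e; have [et ->] := ETS_lab pG0 es; exact: et_ab et e.
- move=> le _; split.
  + move=> G GF; rewrite /incr_path.
    have -> : [seq lab (map_tuple (rE (EF (FF G0))) G) i | i <- iota 1 h] =
              map (gl G0) [seq lab G i | i <- iota 1 h].
      rewrite -map_comp; apply/eq_in_map => i; rewrite mem_iota add1n => hi.
      by rewrite /= (lab_g pG0 GF).
    symmetry; apply: (mono_sorted_in (P := Etr G0)).
      by move=> t u et eu; rewrite rle_g.
    apply/allP => t /mapP [i]; rewrite mem_iota add1n => hi ->.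
    by have := lab_Etr pG0 GF hi.
  + move=> x0 s ps.
    have [-> al] : labs (rE (EF (FF G0)) x0) (map (rE (EF (FF G0))) s) =
                   map (gl G0) (labs x0 s) /\ all (Etr G0) (labs x0 s).
      elim: s x0 ps => [|y s IH] x0 //= /andP [es ps].
      have [et eg] := ES_lab pG0 es; have [-> al] := IH y ps.
      by rewrite eg et.
    symmetry; apply: (mono_sorted_in (P := Etr G0)) al.
    by move=> t u et eu; rewrite rle_g.
  + move=> p0 s ps.
    have [-> al] : labs (rE (EF (FF G0)) p0.1) (map (fun p => rE (EF (FF G0)) p.1) s) =
                   map (gl G0) (labs p0.1 (map fst s)) /\ all (Etr G0) (labs p0.1 (map fst s)).
      elim: s p0 ps => [|q s IH] p0 //= /andP [es ps].
      have [et eg] := ETS_lab pG0 es; have [-> al] := IH q ps.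
      by rewrite eg et.
    symmetry; apply: (mono_sorted_in (P := Etr G0)) al.
    by move=> t u et eu; rewrite rle_g.
- exists (gl G0); split.
    move=> a b aE bE ab; apply: et_ab (erefl _).
    by apply/EtrP; exists a, b.
  split.
  + by split; [exact: rE_injVS pG0 | exact: VS_img].
  + by split; [by [] | exact: rEp_inj pG0].
  + by move=> G i GF; have := flip_comm pG0 i GF.
  + split; last by move=> G i GF hi; rewrite (lab_g pG0 GF hi).
    split; last exact: LS_img.
    by move=> t u tL uL; apply: gl_inj; apply: LS_Etr.
  + by move=> t u tL uL; apply: lex_g.
Qed.
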